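(* Let $\gamma>0$ and $\theta>0$ be fixed constants, let $\delta>0$ (the fatality rate), and let $y(0),y(1),y(2),\dots$ be a given real sequence (the measured fraction of deceased individuals). Consider the discrete-time linear time-invariant filter \[ \hat{x}(k+1)=A\,\hat{x}(k)+B\,\hat{u}(k),\qquad \hat{z}(k)=C\,\hat{x}(k)+D\,\hat{u}(k),\qquad k=0,1,2,\dots, \] with state $\hat{x}(k)\in\mathbb{R}^2$, output $\hat{z}(k)=(\hat{z}_1(k),\hat{z}_2(k))^T\in\mathbb{R}^2$, matrices \[ A=\begin{bmatrix}0&0\\1&0\end{bmatrix},\quad B=\begin{bmatrix}1\\0\end{bmatrix},\quad D=\begin{bmatrix}\gamma^{-1}\theta^{-1}\\0\end{bmatrix},\quad C=\begin{bmatrix}\theta^{-1}+\gamma^{-1}-2\theta^{-1}\gamma^{-1} & (1-\theta^{-1})(1-\gamma^{-1})\\ \theta^{-1} & 1-\theta^{-1}\end{bmatrix}, \] arbitrary initial state $\hat{x}(0)\in\mathbb{R}^2$ (which may depend on $\delta$), and input $\hat{u}(k)=1-\delta^{-1}y(k)$. Then for every $k\ge 2$ the estimate \[ \hat{R}(k)=\frac{\hat{z}_1(k)-\hat{z}_1(k+1)}{\gamma\,(\hat{z}_2(k)-\hat{z}_1(k))} \] (whenever the denominator is nonzero) is independent of the value of the fatality rate $\delta$.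
   Context: This filter arises from an SIRDC epidemic model in which $z_1=x_1$ (susceptible fraction), $z_2=x_1+x_2$ (susceptible plus infected), and $\hat R$ is the estimated effective reproduction number; $\gamma$ is the inverse infectious period, $\theta$ the inverse resolution time. *)

(* Defs.v *)
From HB Require Import structures.
From mathcomp Require Import all_boot all_order all_algebra.
Set Implicit Arguments. Unset Strict Implicit. Unset Printing Implicit Defensive.
Import Order.TTheory GRing.Theory Num.Theory.
Local Open Scope ring_scope.

Section SIRDCFilter.
Variable R : realFieldType.

Definition mx22 (a b c d : R) : 'M[R]_2 :=
  \matrix_(i < 2, j < 2)
    if i == 0 :> nat then (if j == 0 :> nat then a else b)
    else (if j == 0 :> nat then c else d).

Definition cv2 (a b : R) : 'cV[R]_2 :=
  \col_(i < 2) if i == 0 :> nat then a else b.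

Definition idx0 : 'I_2 := @Ordinal 2 0 isT.
Definition idx1 : 'I_2 := @Ordinal 2 1 isT.

Definition filtA : 'M[R]_2 := mx22 0 0 1 0.
Definition filtB : 'cV[R]_2 := cv2 1 0.
Definition filtD (gamma theta : R) : 'cV[R]_2 := cv2 (gamma^-1 * theta^-1) 0.
Definition filtC (gamma theta : R) : 'M[R]_2 :=
  mx22 (theta^-1 + gamma^-1 - 2 * theta^-1 * gamma^-1)
       ((1 - theta^-1) * (1 - gamma^-1))
       theta^-1 (1 - theta^-1).

Definition uhat (delta : R) (y : nat -> R) (k : nat) : R := 1 - delta^-1 * y k.

Fixpoint xhat (delta : R) (y : nat -> R) (x0 : 'cV[R]_2) (k : nat) : 'cV[R]_2 :=
  match k with
  | 0 => x0
  | k'.+1 => filtA *m xhat delta y x0 k' + uhat delta y k' *: filtB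
  end.

Definition zhat (gamma theta delta : R) (y : nat -> R) (x0 : 'cV[R]_2) (k : nat)
  : 'cV[R]_2 :=
  filtC gamma theta *m xhat delta y x0 k + uhat delta y k *: filtD gamma theta.

Definition zhat1 gamma theta delta y x0 k : R := zhat gamma theta delta y x0 k idx0 ord0.
Definition zhat2 gamma theta delta y x0 k : R := zhat gamma theta delta y x0 k idx1 ord0.

Definition Rhat_den (gamma theta delta : R) y x0 k : R :=
  gamma * (zhat2 gamma theta delta y x0 k - zhat1 gamma theta delta y x0 k).

Definition Rhat (gamma theta delta : R) y x0 k : R :=
  (zhat1 gamma theta delta y x0 k - zhat1 gamma theta delta y x0 k.+1)
  / Rhat_den gamma theta delta y x0 k.

End SIRDCFilter.

(* Main.v *)
Require Import Defs.
From HB Require Import structures.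
From mathcomp Require Import all_boot all_order all_algebra.
From mathcomp Require Import ring lra.
Import Order.TTheory GRing.Theory Num.Theory.
Local Open Scope ring_scope.

Lemma mul2E (R : realFieldType) (M : 'M[R]_2) (v : 'cV[R]_2) i :
  (M *m v) i ord0 = M i idx0 * v idx0 ord0 + M i idx1 * v idx1 ord0.
Proof.
rewrite mxE !big_ord_recr big_ord0 /= add0r.
have -> : widen_ord (leqnSn 1) ord_max = idx0 by apply/val_inj.
by have -> : (ord_max : 'I_2) = idx1 by apply/val_inj.
Qed.

Lemma xhat_S0 (R : realFieldType) d y x0 k :
  @xhat R d y x0 k.+1 idx0 ord0 = uhat d y k.
Proof.
rewrite /= mxE mul2E /filtA /filtB /mx22 /cv2 !mxE /=. ring.
Qed.

Lemma xhat_S1 (R : realFieldType) d y x0 k :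
  @xhat R d y x0 k.+1 idx1 ord0 = xhat d y x0 k idx0 ord0.
Proof.
rewrite /= mxE mul2E /filtA /filtB /mx22 /cv2 !mxE /=. ring.
Qed.

Lemma z1E (R : realFieldType) g t d y x0 k :
  @zhat1 R g t d y x0 k.+2 =
  (t^-1 + g^-1 - 2 * t^-1 * g^-1) * uhat d y k.+1
  + ((1 - t^-1) * (1 - g^-1)) * uhat d y k + uhat d y k.+2 * (g^-1 * t^-1).
Proof.
rewrite /zhat1 /zhat mxE mul2E xhat_S1 !xhat_S0 /filtC /filtD /mx22 /cv2 !mxE /=. ring.
Qed.

Lemma z2E (R : realFieldType) g t d y x0 k :
  @zhat2 R g t d y x0 k.+2 =
  t^-1 * uhat d y k.+1 + (1 - t^-1) * uhat d y k.
Proof.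
rewrite /zhat2 /zhat mxE mul2E xhat_S1 !xhat_S0 /filtC /filtD /mx22 /cv2 !mxE /=. ring.
Qed.

Theorem proposition1 (R : realFieldType) (gamma theta : R)
  (hgamma : 0 < gamma) (htheta : 0 < theta) (y : nat -> R)
  (delta1 delta2 : R) (hd1 : 0 < delta1) (hd2 : 0 < delta2)
  (x01 x02 : 'cV[R]_2) (k : nat) (hk : (2 <= k)%N) :
  Rhat_den gamma theta delta1 y x01 k != 0 ->
  Rhat_den gamma theta delta2 y x02 k != 0 ->
  Rhat gamma theta delta1 y x01 k = Rhat gamma theta delta2 y x02 k.
Proof.
case: k hk => [|[|k]] // _.
rewrite /Rhat /Rhat_den !z1E !z2E /uhat.
set a : R := theta^-1; set b : R := gamma^-1.
set e1 : R := delta1^-1; set e2 : R := delta2^-1.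
have e1n : e1 != 0 by rewrite invr_eq0 gt_eqF.
have e2n : e2 != 0 by rewrite invr_eq0 gt_eqF.
clearbody a b e1 e2.
set N := (a + b - 2 * a * b) * y k.+2 + (1 - a) * (1 - b) * y k.+1 + y k.+3 * (b * a)
        - ((a + b - 2 * a * b) * y k.+1 + (1 - a) * (1 - b) * y k + y k.+2 * (b * a)).
set M := ((a + b - 2 * a * b) * y k.+1 + (1 - a) * (1 - b) * y k + y k.+2 * (b * a)) - (a * y k.+1 + (1 - a) * y k).
have E1 : forall e : R, (a + b - 2 * a * b) * (1 - e * y k.+1) + (1 - a) * (1 - b) * (1 - e * y k) +
   (1 - e * y k.+2) * (b * a) - ((a + b - 2 * a * b) * (1 - e * y k.+2) + (1 - a) * (1 - b) * (1 - e * y k.+1) +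
   (1 - e * y k.+3) * (b * a)) = e * N :> R by move=> e; rewrite /N; ring.
have E2 : forall e : R, gamma * (a * (1 - e * y k.+1) + (1 - a) * (1 - e * y k) -
    ((a + b - 2 * a * b) * (1 - e * y k.+1) + (1 - a) * (1 - b) * (1 - e * y k) + (1 - e * y k.+2) * (b * a)))
    = e * (gamma * M) :> R by move=> e; rewrite /M; ring.
rewrite !E1 !E2 => h1 h2.
have gM : gamma * M != 0 by apply: contra h1 => /eqP ->; rewrite mulr0.
by rewrite !invfM !mulrA (mulrC e1) -(mulrA _ e1) mulfV // (mulrC e2) -(mulrA _ e2) mulfV // !mulr1.
Qed.
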